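(* Let $(M,d)$ be a metric space in which any two points $A,B\in M$ are joined by a unique metric segment $[A,B]$. Then $(M,d)$ is an $\mathbb R$-tree if and only if the following Condition (A) holds: for any three distinct points $A,B,C\in M$ there exists a unique $O\in M$ such that $\{X,Y\}\subset\mathcal C_d(Z,O)$ for all distinct $X,Y,Z\in\{A,B,C\}$.
   Context: For a metric space $(M,d)$ and $A,B\in M$, the metric segment is $[A,B]=\{X\in M:\ d(A,X)+d(X,B)=d(A,B)<+\infty\}$, and $\mathcal C_d(A,B)=\{X\in M:\ d(X,A)=d(X,B)+d(A,B)<+\infty\}$. An $\mathbb R$-tree is a nonempty metric space $(M,d)$ such that: (a) any two points $A,B\in M$ are joined by a unique metric segment $[A,B]$; (b) for all $A,B,C\in M$, $[A,B]\cap[A,C]=[A,O]$ for some $O\in M$; (c) if $A,B,C\in M$ and $[A,B]\cap[B,C]=\{B\}$, then $[A,B]\cup[B,C]=[A,C]$. *)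

(* Defs.v *)
From Stdlib Require Import Reals.
Open Scope R_scope.

Section RTree.
Context {M : Type} (d : M -> M -> R).

Definition is_metric : Prop :=
  (forall x y, d x y = 0 <-> x = y) /\
  (forall x y, d x y = d y x) /\
  (forall x y z, d x z <= d x y + d y z).

Definition segment (A B : M) (X : M) : Prop := d A X + d X B = d A B.

Definition Cset (A B : M) (X : M) : Prop := d X A = d X B + d A B.

Definition is_metric_segment_joining (A B : M) (S : M -> Prop) : Prop :=
  exists f : R -> M,
    f 0 = A /\ f (d A B) = B /\
    (forall s t, 0 <= s <= d A B -> 0 <= t <= d A B ->
                 d (f s) (f t) = Rabs (s - t)) /\
    (forall X, S X <-> exists t, 0 <= t <= d A B /\ f t = X).

Definition unique_segments : Prop :=
  forall A B : M,
    is_metric_segment_joining A B (segment A B) /\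
    (forall S, is_metric_segment_joining A B S ->
               forall X, S X <-> segment A B X).

Definition is_R_tree : Prop :=
  inhabited M /\
  unique_segments /\
  (forall A B C : M, exists O : M,
     forall X, (segment A B X /\ segment A C X) <-> segment A O X) /\
  (forall A B C : M,
     (forall X, (segment A B X /\ segment B C X) <-> X = B) ->
     forall X, (segment A B X \/ segment B C X) <-> segment A C X).

Definition conditionA : Prop :=
  forall A B C : M, A <> B -> B <> C -> A <> C ->
    exists! O : M,
      forall X Y Z : M,
        (X = A \/ X = B \/ X = C) ->
        (Y = A \/ Y = B \/ Y = C) ->
        (Z = A \/ Z = B \/ Z = C) ->
        X <> Y -> Y <> Z -> X <> Z ->
        Cset Z O X /\ Cset Z O Y.

End RTree.

(* Main.v *)
Require Import Defs.
From Stdlib Require Import Reals Lra Classical.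
Open Scope R_scope.

Section S.
Variable M : Type.
Variable d : M -> M -> R.
Hypothesis Hm : is_metric d.

Lemma d0 x : d x x = 0.
Proof. destruct Hm as [H _]. apply (H x x). reflexivity. Qed.
Lemma dsym x y : d x y = d y x.
Proof. destruct Hm as [_ [H _]]. apply H. Qed.
Lemma dtri x y z : d x z <= d x y + d y z.
Proof. destruct Hm as [_ [_ H]]. apply H. Qed.
Lemma dpos x y : 0 <= d x y.
Proof. pose proof (dtri x y x). rewrite d0, (dsym y x) in H. lra. Qed.
Lemma deq x y : d x y = 0 -> x = y.
Proof. destruct Hm as [H _]. apply H. Qed.

Lemma seg_sym A B X : segment d A B X -> segment d B A X.
Proof. unfold segment; intros; rewrite (dsym B X), (dsym X A), (dsym B A); lra. Qed.

Lemma sub_seg A B X Y : segment d A B X -> segment d A X Y -> segment d A B Y.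
Proof. unfold segment. intros H1 H2. pose proof (dtri Y X B); pose proof (dtri A Y B). lra. Qed.

Lemma seg_refl_l A X : segment d A A X -> X = A.
Proof. unfold segment. intros H. rewrite d0 in H. pose proof (dpos A X); pose proof (dpos X A).
  apply deq. lra. Qed.
Lemma seg_A A B : segment d A B A.
Proof. unfold segment. rewrite d0. lra. Qed.
Lemma seg_B A B : segment d A B B.
Proof. unfold segment. rewrite d0. lra. Qed.

Hypothesis Hu : unique_segments d.

Lemma Lpar A B (f : R -> M) s : f 0 = A ->
  (forall s t, 0 <= s <= d A B -> 0 <= t <= d A B -> d (f s) (f t) = Rabs (s - t)) ->
  0 <= s <= d A B -> d A (f s) = s.
Proof.
  intros f0 fi Hs. assert (E : d (f 0) (f s) = Rabs (0 - s)) by (apply fi; lra).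
  rewrite f0 in E. rewrite E. replace (0 - s) with (- s) by ring.
  rewrite Rabs_Ropp, Rabs_right; lra.
Qed.

Lemma L0 A B X Y : segment d A B X -> segment d A B Y -> d A X = d A Y -> X = Y.
Proof.
  destruct (Hu A B) as [[f [f0 [f1 [fi fs]]]] _].
  intros HX HY Hd. apply fs in HX as [s [Hs <-]]. apply fs in HY as [s' [Hs' <-]].
  rewrite (Lpar A B f s f0 fi Hs), (Lpar A B f s' f0 fi Hs') in Hd. subst; reflexivity.
Qed.

Lemma Lex A B t : 0 <= t <= d A B -> exists P, segment d A B P /\ d A P = t.
Proof.
  destruct (Hu A B) as [[f [f0 [f1 [fi fs]]]] _]. intros Ht.
  exists (f t). split. apply fs. exists t; auto. apply (Lpar A B f t f0 fi Ht).
Qed.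

Lemma L1 A B X Y : segment d A B X -> segment d A B Y -> d A X <= d A Y -> segment d A Y X.
Proof.
  intros HX HY Hle.
  destruct (Lex A Y (d A X)) as [P [HP HdP]]. split; [apply dpos | exact Hle].
  assert (P = X) by exact (L0 A B P X (sub_seg A B Y P HY HP) HX HdP).
  subst; auto.
Qed.

End S.

Theorem theorem2p2 (M : Type) (d : M -> M -> R) :
  is_metric d -> inhabited M -> unique_segments d ->
  (is_R_tree d <-> conditionA d).
Proof.
  intros Hm Hi Hu. split.
  - intros [_ [_ [Hb Hc]]] A B C nAB nBC nAC.
    destruct (Hb A B C) as [O HO].
    assert (OAB : segment d A B O /\ segment d A C O) by (apply HO; apply seg_B; auto).
    destruct OAB as [OAB OAC].
    assert (OBC : segment d B C O).
    { assert (Hx : forall X, segment d B O X /\ segment d O C X <-> X = O).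
      2: { apply ((Hc B O C Hx) O). left; apply seg_B; auto. }
      intro X; split; [intro H | intro e; subst X; split; [apply seg_B| apply seg_A]; auto].
      destruct H as [H1 H2].
      assert (XAB : segment d A B X) by
        (apply seg_sym; auto; apply (sub_seg M d Hm B A O X); [apply seg_sym|]; auto).
      assert (XAC : segment d A C X) by
        (apply seg_sym; auto; apply (sub_seg M d Hm C A O X); apply seg_sym; auto).
      assert (XAO : segment d A O X) by (apply HO; auto).
      unfold segment in *.
      pose proof (dsym M d Hm X O); pose proof (dsym M d Hm X B); pose proof (dsym M d Hm O B).
      pose proof (dpos M d Hm X O).
      apply (deq M d Hm). lra. }
    unfold segment in OAB, OAC, OBC.
    exists O. split.
    + intros X Y Z hX hY hZ n1 n2 n3. unfold Cset.
      pose proof (dsym M d Hm A B); pose proof (dsym M d Hm A C); pose proof (dsym M d Hm B C);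
      pose proof (dsym M d Hm A O); pose proof (dsym M d Hm B O); pose proof (dsym M d Hm C O).
      destruct hX as [ -> | [ -> | -> ] ]; destruct hY as [ -> | [ -> | -> ] ]; destruct hZ as [ -> | [ -> | -> ] ];
        try congruence; split; lra.
    + intros O' HO'.
      assert (nCA : C <> A) by congruence. assert (nBA : B <> A) by congruence.
      destruct (HO' A B C (or_introl eq_refl) (or_intror (or_introl eq_refl))
        (or_intror (or_intror eq_refl)) nAB nBC nAC) as [H1 H2].
      destruct (HO' B C A (or_intror (or_introl eq_refl)) (or_intror (or_intror eq_refl))
        (or_introl eq_refl) nBC nCA nBA) as [H3 H4].
      unfold Cset in *.
      pose proof (dsym M d Hm A B); pose proof (dsym M d Hm A C); pose proof (dsym M d Hm B C);
      pose proof (dsym M d Hm A O'); pose proof (dsym M d Hm B O'); pose proof (dsym M d Hm C O');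
      pose proof (dsym M d Hm A O); pose proof (dsym M d Hm B O); pose proof (dsym M d Hm C O);
      pose proof (dsym M d Hm O O').
      assert (S1 : segment d A O O').
      { apply HO. unfold segment. split; lra. }
      unfold segment in S1. apply (deq M d Hm). lra.
  - intros HA. split; [exact Hi | split; [exact Hu | split]].
    + intros A B C.
      destruct (classic (A = B)) as [eAB|nAB].
      { subst B. exists A. intro X. split.
        - intros [H _]. apply seg_refl_l in H; auto. subst; apply seg_A; auto.
        - intros H. apply seg_refl_l in H; auto. subst; split; apply seg_A; auto. }
      destruct (classic (A = C)) as [eAC|nAC].
      { subst C. exists A. intro X. split.
        - intros [_ H]. apply seg_refl_l in H; auto. subst; apply seg_A; auto.
        - intros H. apply seg_refl_l in H; auto. subst; split; apply seg_A; auto. }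
      destruct (classic (B = C)) as [eBC|nBC].
      { subst C. exists B. intro X. split; [intros [H _]; exact H | intros H; split; exact H]. }
      destruct (HA A B C nAB nBC nAC) as [O [HO _]].
      assert (nCA : C <> A) by congruence. assert (nBA : B <> A) by congruence.
      destruct (HO A B C (or_introl eq_refl) (or_intror (or_introl eq_refl))
        (or_intror (or_intror eq_refl)) nAB nBC nAC) as [H1 H2].
      destruct (HO B C A (or_intror (or_introl eq_refl)) (or_intror (or_intror eq_refl))
        (or_introl eq_refl) nBC nCA nBA) as [H3 H4].
      unfold Cset in *.
      pose proof (dsym M d Hm A B); pose proof (dsym M d Hm A C); pose proof (dsym M d Hm B C);
      pose proof (dsym M d Hm A O); pose proof (dsym M d Hm B O); pose proof (dsym M d Hm C O).
      assert (sAB : segment d A B O) by (unfold segment; lra).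
      assert (sAC : segment d A C O) by (unfold segment; lra).
      assert (sBC : segment d B C O) by (unfold segment; lra).
      exists O. intro X. split.
      * intros [X1 X2]. destruct (Rle_dec (d A X) (d A O)) as [r|r].
        -- apply (L1 M d Hm Hu A B X O); auto.
        -- assert (S : segment d A X O) by (apply (L1 M d Hm Hu A B O X); auto; lra).
           assert (E : O = X).
           { unfold segment in *. pose proof (dtri M d Hm B X C).
             pose proof (dsym M d Hm X B); pose proof (dsym M d Hm X C);
             pose proof (dsym M d Hm X O); pose proof (dpos M d Hm O X).
             apply (deq M d Hm). lra. }
           subst X; apply seg_B; auto.
      * intros HX. split; apply (sub_seg M d Hm A _ O X); auto.
    + intros A B C Hi2 X.
      assert (sB : segment d A C B).
      { destruct (classic (A = B)) as [eAB|nAB].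
        { subst B. apply seg_A; auto. }
        destruct (classic (B = C)) as [eBC|nBC].
        { subst C. apply seg_B; auto. }
        destruct (classic (A = C)) as [eAC|nAC].
        { subst C. exfalso. apply nAB. apply (proj1 (Hi2 A)). split; [apply seg_A|apply seg_B]; auto. }
        destruct (HA A B C nAB nBC nAC) as [O [HO _]].
        assert (nCA : C <> A) by congruence. assert (nBA : B <> A) by congruence.
        destruct (HO A B C (or_introl eq_refl) (or_intror (or_introl eq_refl))
          (or_intror (or_intror eq_refl)) nAB nBC nAC) as [H1 H2].
        destruct (HO B C A (or_intror (or_introl eq_refl)) (or_intror (or_intror eq_refl))
          (or_introl eq_refl) nBC nCA nBA) as [H3 H4].
        unfold Cset in *.
        pose proof (dsym M d Hm A B); pose proof (dsym M d Hm A C); pose proof (dsym M d Hm B C);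
        pose proof (dsym M d Hm A O); pose proof (dsym M d Hm B O); pose proof (dsym M d Hm C O).
        assert (sAC : segment d A C O) by (unfold segment; lra).
        assert (E : O = B) by (apply (Hi2 O); unfold segment; split; lra).
        subst O; exact sAC. }
      split.
      * intros [H|H].
        -- apply (sub_seg M d Hm A C B X); auto.
        -- apply seg_sym; auto. apply (sub_seg M d Hm C A B X); apply seg_sym; auto.
      * intros H. destruct (Rle_dec (d A X) (d A B)) as [r|r].
        -- left. apply (L1 M d Hm Hu A C X B); auto.
        -- right. assert (S : segment d A X B) by (apply (L1 M d Hm Hu A C B X); auto; lra).
           unfold segment in *. lra.
Qed.
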